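(* Let $n\ge 2$ and let $\mathbf{a}^{1},\mathbf{a}^{2}\in\mathbb{R}^{n}$ be linearly independent vectors. Let $l_{i}=\{t\mathbf{b}^{i}+\mathbf{c}^{i}:t\in\mathbb{R}\}$, $i=1,2,3$, be three distinct straight lines in $\mathbb{R}^{n}$ (so $\mathbf{b}^{i}\in\mathbb{R}^{n}\setminus\{\mathbf{0}\}$, $\mathbf{c}^{i}\in\mathbb{R}^{n}$), and let $L=l_{1}\cup l_{2}\cup l_{3}$. Then there exists a closed path $p=(\mathbf{x}^{1},\dots,\mathbf{x}^{m})$ with respect to the directions $\mathbf{a}^{1}$ and $\mathbf{a}^{2}$ such that all points of $p$ lie in $L$.
   Context: A path with respect to the directions $\mathbf{a}^{1},\mathbf{a}^{2}$ is a finite ordered tuple of points $(\mathbf{x}^{1},\dots,\mathbf{x}^{k})$ in $\mathbb{R}^{n}$ with $\mathbf{x}^{j}\neq\mathbf{x}^{j+1}$ for all $j$, such that the differences $\mathbf{x}^{j+1}-\mathbf{x}^{j}$ are perpendicular alternately to $\mathbf{a}^{1}$ and $\mathbf{a}^{2}$; i.e., for some ordering $(\mathbf{u},\mathbf{v})$ of $\{\mathbf{a}^{1},\mathbf{a}^{2}\}$ we have $\mathbf{u}\cdot\mathbf{x}^{1}=\mathbf{u}\cdot\mathbf{x}^{2}$, $\mathbf{v}\cdot\mathbf{x}^{2}=\mathbf{v}\cdot\mathbf{x}^{3}$, $\mathbf{u}\cdot\mathbf{x}^{3}=\mathbf{u}\cdot\mathbf{x}^{4}$, and so on. A tuple $(\mathbf{x}^{1},\dots,\mathbf{x}^{k})$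 is a closed path with respect to $\mathbf{a}^{1},\mathbf{a}^{2}$ if $k$ is even and $(\mathbf{x}^{1},\dots,\mathbf{x}^{k},\mathbf{x}^{1})$ is a path with respect to $\mathbf{a}^{1},\mathbf{a}^{2}$. *)

(* Defs.v *)
From HB Require Import structures.
From mathcomp Require Import all_boot all_order all_algebra.
From mathcomp Require Import reals.
Set Implicit Arguments. Unset Strict Implicit. Unset Printing Implicit Defensive.
Import Order.TTheory GRing.Theory Num.Theory.
Local Open Scope ring_scope.

Definition dotv (R : realType) (n : nat) (u v : 'rV[R]_n) : R :=
  \sum_(i < n) u 0 i * v 0 i.

(* (x^1,...,x^k) given as the sequence s is a path w.r.t. the ordered pair
   (u, v): consecutive points distinct, and the j-th step (0-based) is
   perpendicular to u when j is even, to v when j is odd. *)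
Definition path_uv (R : realType) (n : nat) (u v : 'rV[R]_n)
    (s : seq 'rV[R]_n) : Prop :=
  forall j : nat, (j.+1 < size s)%N ->
    nth 0 s j <> nth 0 s j.+1 /\
    (if odd j then dotv v (nth 0 s j) = dotv v (nth 0 s j.+1)
              else dotv u (nth 0 s j) = dotv u (nth 0 s j.+1)).

Definition is_path (R : realType) (n : nat) (a1 a2 : 'rV[R]_n)
    (s : seq 'rV[R]_n) : Prop :=
  (0 < size s)%N /\ (path_uv a1 a2 s \/ path_uv a2 a1 s).

Definition is_closed_path (R : realType) (n : nat) (a1 a2 : 'rV[R]_n)
    (s : seq 'rV[R]_n) : Prop :=
  (0 < size s)%N /\ ~~ odd (size s) /\ is_path a1 a2 (rcons s (nth 0 s 0)).

Definition on_line (R : realType) (n : nat) (b c x : 'rV[R]_n) : Prop :=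
  exists t : R, x = t *: b + c.

Definition same_line (R : realType) (n : nat) (b c b' c' : 'rV[R]_n) : Prop :=
  forall x, on_line b c x <-> on_line b' c' x.

(* Main.v *)
Require Import Defs.
From HB Require Import structures.
From mathcomp Require Import all_boot all_order all_algebra.
From mathcomp Require Import reals.
From mathcomp Require Import ring lra.
From Stdlib Require Import Classical_Prop.
Import Order.TTheory GRing.Theory Num.Theory.
Local Open Scope ring_scope.


Lemma dotv_lin (R : realType) (n : nat) (a b c : 'rV[R]_n) (t : R) :
  dotv a (t *: b + c) = t * dotv a b + dotv a c.
Proof.
rewrite /dotv mulr_sumr -big_split /=; apply: eq_bigr => i _.
rewrite !mxE; ring.
Qed.

Lemma neq_dot (R : realType) (n : nat) (a x y : 'rV[R]_n) :
  dotv a x != dotv a y -> x <> y.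
Proof. by move=> /eqP h e; apply: h; rewrite e. Qed.

Lemma closed_swap (R : realType) (n : nat) (a1 a2 : 'rV[R]_n) s :
  is_closed_path a2 a1 s -> is_closed_path a1 a2 s.
Proof. by move=> [h1 [h2 [h3 h4]]]; split=> //; split=> //; split=> //; tauto. Qed.

Lemma cyc2 (R : realType) (n : nat) (a1 a2 : 'rV[R]_n) A B :
  A <> B -> dotv a1 A = dotv a1 B -> dotv a2 A = dotv a2 B ->
  is_closed_path a1 a2 [:: A; B].
Proof.
move=> hAB h1 h2; split=> //; split=> //; split=> //; left.
move=> [|[|j]] //= _; split=> //; by move=> e; apply: hAB.
Qed.

Lemma cyc4 (R : realType) (n : nat) (a1 a2 : 'rV[R]_n) A B C D :
  A <> B -> dotv a1 A = dotv a1 B ->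
  B <> C -> dotv a2 B = dotv a2 C ->
  C <> D -> dotv a1 C = dotv a1 D ->
  D <> A -> dotv a2 D = dotv a2 A ->
  is_closed_path a1 a2 [:: A; B; C; D].
Proof.
move=> ? ? ? ? ? ? ? ?; split=> //; split=> //; split=> //; left.
by move=> [|[|[|[|j]]]] //= _.
Qed.

Lemma cyc6 (R : realType) (n : nat) (a1 a2 : 'rV[R]_n) A B C D E F :
  A <> B -> dotv a1 A = dotv a1 B ->
  B <> C -> dotv a2 B = dotv a2 C ->
  C <> D -> dotv a1 C = dotv a1 D ->
  D <> E -> dotv a2 D = dotv a2 E ->
  E <> F -> dotv a1 E = dotv a1 F ->
  F <> A -> dotv a2 F = dotv a2 A ->
  is_closed_path a1 a2 [:: A; B; C; D; E; F].
Proof.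
move=> ? ? ? ? ? ? ? ? ? ? ? ?; split=> //; split=> //; split=> //; left.
by move=> [|[|[|[|[|[|j]]]]]] //= _.
Qed.

Lemma avoid (R : realType) (l : seq (R * R)) :
  (forall f, f \in l -> f.1 != 0 \/ f.2 != 0) ->
  forall M : R, exists t, M < t /\ forall f, f \in l -> f.1 * t + f.2 != 0.
Proof.
elim: l => [|[al be] l IH] hl M.
  by exists (M + 1); split=> //; lra.
have [t [Mt ht]] := IH (fun f hf => hl f (mem_behead (s:=(al,be)::l) hf)) (Num.max M (- be / al)).
exists t; split.
  by apply: le_lt_trans Mt; rewrite le_max lexx.
move=> f; rewrite inE => /orP [/eqP -> /=|]; last exact: ht.
have := hl (al, be); rewrite inE eqxx => /(_ isT) /= hab.
have [a0|an0] := eqVneq al 0.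
  rewrite a0 mul0r add0r; case: hab => //; by rewrite a0 eqxx.
apply/eqP => e.
have : t = - be / al by apply: (mulIf an0); rewrite mulrVK ?unitfE //; lra.
move=> te; move: Mt; rewrite te gt_max ltxx andbF //.
Qed.

Set Implicit Arguments. Unset Strict Implicit.


Definition injP (R : realType) (n : nat) (a1 a2 : 'rV[R]_n) (L : 'rV[R]_n -> Prop) :=
  forall x y, L x -> L y -> dotv a1 x = dotv a1 y -> dotv a2 x = dotv a2 y -> x = y.

Definition goalP (R : realType) (n : nat) (a1 a2 : 'rV[R]_n) (L : 'rV[R]_n -> Prop) :=
  exists s, is_closed_path a1 a2 s /\ forall x, x \in s -> L x.

Lemma goal_swap (R : realType) (n : nat) (a1 a2 : 'rV[R]_n) L :
  goalP a2 a1 L -> goalP a1 a2 L.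
Proof. by move=> [s [h1 h2]]; exists s; split=> //; apply: closed_swap. Qed.

Lemma injP_swap (R : realType) (n : nat) (a1 a2 : 'rV[R]_n) L :
  injP a1 a2 L -> injP a2 a1 L.
Proof. by move=> h x y hx hy e1 e2; apply: h. Qed.

Lemma same_line_sym (R : realType) (n : nat) (b c b' c' : 'rV[R]_n) :
  ~ same_line b c b' c' -> ~ same_line b' c' b c.
Proof. by move=> h hs; apply: h => x; split; move/hs. Qed.

Lemma on_line_dot (R : realType) (n : nat) (a b c y : 'rV[R]_n) :
  on_line b c y -> exists t, dotv a y = t * dotv a b + dotv a c.
Proof. by move=> [t ->]; exists t; rewrite dotv_lin. Qed.

Lemma sameL (R : realType) (n : nat) (a1 a2 : 'rV[R]_n) L (b c b' c' : 'rV[R]_n) :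
  injP a1 a2 L -> (forall x, on_line b c x -> L x) -> (forall x, on_line b' c' x -> L x) ->
  (forall y, on_line b' c' y -> exists x, on_line b c x /\ dotv a1 x = dotv a1 y /\ dotv a2 x = dotv a2 y) ->
  (forall y, on_line b c y -> exists x, on_line b' c' x /\ dotv a1 x = dotv a1 y /\ dotv a2 x = dotv a2 y) ->
  same_line b c b' c'.
Proof.
move=> hinj hL hL' h1 h2 y; split=> hy.
  have [x [hx [e1 e2]]] := h2 y hy.
  by rewrite -(hinj x y (hL' x hx) (hL y hy) e1 e2).
have [x [hx [e1 e2]]] := h1 y hy.
by rewrite -(hinj x y (hL x hx) (hL' y hy) e1 e2).
Qed.

Lemma vert_struct (R : realType) (n : nat) (a1 a2 : 'rV[R]_n) L (b c : 'rV[R]_n) :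
  injP a1 a2 L -> (forall x, on_line b c x -> L x) -> b != 0 -> dotv a1 b = 0 ->
  exists Z : R -> 'rV[R]_n, forall w, on_line b c (Z w) /\ dotv a1 (Z w) = dotv a1 c
     /\ dotv a2 (Z w) = w.
Proof.
move=> hinj hL hb hp.
have hr : dotv a2 b != 0.
  apply/eqP => hr; move/eqP: hb; apply.
  have := hinj (1 *: b + c) (0 *: b + c).
  rewrite !dotv_lin hp hr !mulr0 => /(_ _ _ erefl erefl).
  rewrite scale0r scale1r add0r => h.
  have hbc : L (b + c) by apply: hL; exists 1; rewrite scale1r.
  have hc : L c by apply: hL; exists 0; rewrite scale0r add0r.
  have := h hbc hc.
  by move/(congr1 (fun z => z - c)); rewrite addrK subrr.
exists (fun w => ((w - dotv a2 c) / dotv a2 b) *: b + c) => w.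
split; first by exists ((w - dotv a2 c) / dotv a2 b).
rewrite !dotv_lin hp mulr0 add0r; split=> //.
by rewrite mulfVK // subrK.
Qed.

Lemma graph_struct (R : realType) (n : nat) (a1 a2 : 'rV[R]_n) (b c : 'rV[R]_n) :
  dotv a1 b != 0 ->
  exists m k (Y : R -> 'rV[R]_n),
    (forall w, on_line b c (Y w) /\ dotv a1 (Y w) = w /\ dotv a2 (Y w) = m * w + k) /\
    (forall y, on_line b c y -> dotv a2 y = m * dotv a1 y + k) /\
    (m = 0 -> dotv a2 b = 0).
Proof.
move=> hp.
set p := dotv a1 b; set q := dotv a1 c; set r := dotv a2 b; set s := dotv a2 c.
exists (r / p), (s - r / p * q), (fun w => ((w - q) / p) *: b + c).
split; [|split].
- move=> w; split; first by exists ((w - q) / p).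
  rewrite !dotv_lin -/p -/q -/r -/s; split; first by rewrite mulfVK // subrK.
  by field; exact: hp.
- move=> y [t ->]; rewrite !dotv_lin -/p -/q -/r -/s; field; exact: hp.
- by move=> /eqP; rewrite mulf_eq0 invr_eq0 (negbTE hp) orbF => /eqP.
Qed.

Lemma Vcase (R : realType) (n : nat) (a1 a2 : 'rV[R]_n) L q (Z : R -> 'rV[R]_n) B C :
  (forall w, L (Z w) /\ dotv a1 (Z w) = q /\ dotv a2 (Z w) = w) ->
  L B -> L C -> dotv a1 B = dotv a1 C -> dotv a1 B != q -> dotv a2 B != dotv a2 C ->
  goalP a1 a2 L.
Proof.
move=> hZ hB hC e nq nv.
have [LA [uA vA]] := hZ (dotv a2 B).
have [LD [uD vD]] := hZ (dotv a2 C).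
apply: goal_swap.
exists [:: Z (dotv a2 B); B; C; Z (dotv a2 C)]; split.
  apply: cyc4.
  - by apply: (@neq_dot _ _ a1); rewrite uA eq_sym.
  - by rewrite vA.
  - exact: neq_dot nv.
  - exact: e.
  - by apply: (@neq_dot _ _ a1); rewrite uD -e.
  - by rewrite vD.
  - by apply: (@neq_dot _ _ a2); rewrite vD vA eq_sym.
  - by rewrite uD uA.
by move=> x; rewrite !inE => /orP[/eqP->|/orP[/eqP->|/orP[/eqP->|/eqP->]]].
Qed.


Lemma vert_distinct (R : realType) (n : nat) (a1 a2 : 'rV[R]_n) L (bI cI bJ cJ : 'rV[R]_n) :
  injP a1 a2 L -> (forall x, on_line bI cI x -> L x) -> (forall x, on_line bJ cJ x -> L x) ->
  bI != 0 -> bJ != 0 -> dotv a1 bI = 0 -> dotv a1 bJ = 0 -> ~ same_line bI cI bJ cJ ->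
  dotv a1 cI != dotv a1 cJ.
Proof.
move=> hinj hLI hLJ hbI hbJ hpI hpJ hs; apply/eqP => e; apply: hs.
have [ZI hZI] := vert_struct hinj hLI hbI hpI.
have [ZJ hZJ] := vert_struct hinj hLJ hbJ hpJ.
apply: (sameL hinj hLI hLJ).
  move=> y [t ->]; exists (ZI (dotv a2 (t *: bJ + cJ))).
  have [h1 [h2 h3]] := hZI (dotv a2 (t *: bJ + cJ)).
  by split=> //; rewrite h2 h3 !dotv_lin hpJ mulr0 add0r e.
move=> y [t ->]; exists (ZJ (dotv a2 (t *: bI + cI))).
have [h1 [h2 h3]] := hZJ (dotv a2 (t *: bI + cI)).
by split=> //; rewrite h2 h3 !dotv_lin hpI mulr0 add0r e.
Qed.

Lemma graph_distinct (R : realType) (n : nat) (a1 a2 : 'rV[R]_n) L (bI cI bJ cJ : 'rV[R]_n)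
   mI kI (YI : R -> 'rV[R]_n) mJ kJ (YJ : R -> 'rV[R]_n) :
  injP a1 a2 L -> (forall x, on_line bI cI x -> L x) -> (forall x, on_line bJ cJ x -> L x) ->
  (forall w, on_line bI cI (YI w) /\ dotv a1 (YI w) = w /\ dotv a2 (YI w) = mI * w + kI) ->
  (forall y, on_line bI cI y -> dotv a2 y = mI * dotv a1 y + kI) ->
  (forall w, on_line bJ cJ (YJ w) /\ dotv a1 (YJ w) = w /\ dotv a2 (YJ w) = mJ * w + kJ) ->
  (forall y, on_line bJ cJ y -> dotv a2 y = mJ * dotv a1 y + kJ) ->
  ~ same_line bI cI bJ cJ -> mI != mJ \/ kI != kJ.
Proof.
move=> hinj hLI hLJ hYI hyI hYJ hyJ hs.
have [em|] := eqVneq mI mJ; last by left.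
have [ek|] := eqVneq kI kJ; last by right.
exfalso; apply: hs; apply: (sameL hinj hLI hLJ).
  move=> y hy; exists (YI (dotv a1 y)).
  have [h1 [h2 h3]] := hYI (dotv a1 y).
  by split=> //; rewrite h2 h3 (hyJ y hy) em ek.
move=> y hy; exists (YJ (dotv a1 y)).
have [h1 [h2 h3]] := hYJ (dotv a1 y).
by split=> //; rewrite h2 h3 (hyI y hy) em ek.
Qed.

Lemma caseV (R : realType) (n : nat) (a1 a2 : 'rV[R]_n) L (bI cI bJ cJ bK cK : 'rV[R]_n) :
  injP a1 a2 L -> (forall x, on_line bI cI x -> L x) -> (forall x, on_line bJ cJ x -> L x) ->
  (forall x, on_line bK cK x -> L x) ->
  bI != 0 -> bJ != 0 -> bK != 0 ->
  ~ same_line bI cI bJ cJ -> ~ same_line bI cI bK cK -> ~ same_line bJ cJ bK cK ->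
  dotv a1 bI = 0 -> goalP a1 a2 L.
Proof.
move=> hinj hLI hLJ hLK hbI hbJ hbK hIJ hIK hJK hpI.
have [ZI hZI] := vert_struct hinj hLI hbI hpI.
have hZI' : forall w, L (ZI w) /\ dotv a1 (ZI w) = dotv a1 cI /\ dotv a2 (ZI w) = w.
  by move=> w; have [h1 h2] := hZI w; split=> //; apply: hLI.
have [pJ|pJ] := eqVneq (dotv a1 bJ) 0.
  have [ZJ hZJ] := vert_struct hinj hLJ hbJ pJ.
  have ne := vert_distinct hinj hLI hLJ hbI hbJ hpI pJ hIJ.
  have [h1 [h2 h3]] := hZJ 0; have [h1' [h2' h3']] := hZJ 1.
  apply: (Vcase hZI' (hLJ _ h1) (hLJ _ h1')); rewrite ?h2 ?h2' ?h3 ?h3' //.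
    by rewrite eq_sym.
  by rewrite eq_sym oner_eq0.
have [pK|pK] := eqVneq (dotv a1 bK) 0.
  have [ZJ hZJ] := vert_struct hinj hLK hbK pK.
  have ne := vert_distinct hinj hLI hLK hbI hbK hpI pK hIK.
  have [h1 [h2 h3]] := hZJ 0; have [h1' [h2' h3']] := hZJ 1.
  apply: (Vcase hZI' (hLK _ h1) (hLK _ h1')); rewrite ?h2 ?h2' ?h3 ?h3' //.
    by rewrite eq_sym.
  by rewrite eq_sym oner_eq0.
have [mJ [kJ [YJ [hYJ [hyJ _]]]]] := graph_struct a2 cJ pJ.
have [mK [kK [YK [hYK [hyK _]]]]] := graph_struct a2 cK pK.
have dJK := graph_distinct hinj hLJ hLK hYJ hyJ hYK hyK hJK.
have hnz : forall f : R * R, f \in ([:: (1, - dotv a1 cI); (mJ - mK, kJ - kK)] : seq (R * R)) -> f.1 != 0 \/ f.2 != 0.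
  move=> f; rewrite !inE => /orP[|] /eqP -> /=.
    by left; exact: oner_neq0.
  by case: dJK => h; [left|right]; rewrite subr_eq0.
have [w [_ hw]] := @avoid R _ hnz 0.
have w1 := hw (1, - dotv a1 cI); rewrite /= !inE eqxx /= mul1r subr_eq0 in w1.
have w2 := hw (mJ - mK, kJ - kK); rewrite /= !inE eqxx orbT /= in w2.
have [h1 [h2 h3]] := hYJ w; have [h1' [h2' h3']] := hYK w.
apply: (Vcase hZI' (hLJ _ h1) (hLK _ h1')); rewrite ?h2 ?h2' ?h3 ?h3' //.
  exact: w1.
rewrite -subr_eq0.
have -> : mJ * w + kJ - (mK * w + kK) = (mJ - mK) * w + (kJ - kK) by ring.
exact: w2.
Qed.


Lemma avoid' (R : realType) (l : seq (R * R)) :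
  all (fun f => (f.1 != 0) || (f.2 != 0)) l ->
  exists t, all (fun f => f.1 * t + f.2 != 0) l.
Proof.
move=> /allP h.
have [t [_ ht]] := @avoid R l (fun f hf => orP (h f hf)) 0.
by exists t; apply/allP.
Qed.

Lemma all_eq_slopes (R : realType) (m1 m2 m3 : R) :
  m1 != 0 -> m1 ^+ 2 = m2 * m3 -> m2 ^+ 2 = m1 * m3 -> m3 ^+ 2 = m1 * m2 ->
  m1 = m2 /\ m1 = m3.
Proof.
move=> h1 e1 e2 e3.
have hs : (m2 - m1) * (m1 + m2 + m3) = 0.
  have -> : (m2 - m1) * (m1 + m2 + m3) = (m2 ^+ 2 - m1 * m3) - (m1 ^+ 2 - m2 * m3) by ring.
  by rewrite e1 e2; ring.
have h12 : m1 = m2.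
  move/eqP: hs; rewrite mulf_eq0 => /orP[/eqP|/eqP hs]; first by move/eqP; rewrite subr_eq0 eq_sym => /eqP.
  exfalso.
  have z1 : m1 ^+ 2 - m2 * m3 = 0 by rewrite e1 subrr.
  have z2 : m2 ^+ 2 - m1 * m3 = 0 by rewrite e2 subrr.
  have z3 : m3 ^+ 2 - m1 * m2 = 0 by rewrite e3 subrr.
  have H : 3 * (m1 ^+ 2 + m2 ^+ 2 + m3 ^+ 2) = (m1 + m2 + m3) ^+ 2 + 2 * ((m1 ^+ 2 - m2 * m3) + (m2 ^+ 2 - m1 * m3) + (m3 ^+ 2 - m1 * m2)) by ring.
  rewrite hs z1 z2 z3 in H.
  have p1 : 0 < m1 ^+ 2 by rewrite exprn_even_gt0.
  have := sqr_ge0 m2; have := sqr_ge0 m3; rewrite expr0n /= in H; lra.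
split=> //.
move: e2; rewrite -h12 expr2 => /mulfI -> //.
Qed.


Lemma lin_neq (R : realType) (m k x y : R) : m != 0 -> x != y -> m * x + k != m * y + k.
Proof. by move=> hm; apply: contra; rewrite (inj_eq (addIr k)) (inj_eq (mulfI hm)). Qed.

Lemma mem4 (T : eqType) (P : T -> Prop) a b c d : P a -> P b -> P c -> P d ->
  forall x, x \in [:: a; b; c; d] -> P x.
Proof.
by move=> ? ? ? ? x; rewrite !inE => /orP[/eqP->|/orP[/eqP->|/orP[/eqP->|/eqP->]]].
Qed.

Lemma mem6 (T : eqType) (P : T -> Prop) a b c d e f : P a -> P b -> P c -> P d -> P e -> P f ->
  forall x, x \in [:: a; b; c; d; e; f] -> P x.
Proof.
move=> ? ? ? ? ? ? x; rewrite !inE.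
by move=> /orP[/eqP->|/orP[/eqP->|/orP[/eqP->|/orP[/eqP->|/orP[/eqP->|/eqP->]]]]].
Qed.

Lemma cyc4G (R : realType) (n : nat) (a1 a2 : 'rV[R]_n) L
   mi ki (Yi : R -> 'rV[R]_n) mj kj (Yj : R -> 'rV[R]_n) ml kl (Yl : R -> 'rV[R]_n) :
  (forall w, L (Yi w) /\ dotv a1 (Yi w) = w /\ dotv a2 (Yi w) = mi * w + ki) ->
  (forall w, L (Yj w) /\ dotv a1 (Yj w) = w /\ dotv a2 (Yj w) = mj * w + kj) ->
  (forall w, L (Yl w) /\ dotv a1 (Yl w) = w /\ dotv a2 (Yl w) = ml * w + kl) ->
  mi != 0 -> mi ^+ 2 - mj * ml != 0 ->
  (forall w, mj * w + kj = mi * w + ki -> ml * w + kl = mi * w + ki -> False) ->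
  goalP a1 a2 L.
Proof.
move=> hYi hYj hYl hmi hD hnc.
pose u1 := (mi * (kl - ki) - ml * (ki - kj)) / (mi ^+ 2 - mj * ml).
pose u2 := (mj * (kl - ki) - mi * (ki - kj)) / (mi ^+ 2 - mj * ml).
have e1 : mj * u1 + kj = mi * u2 + ki by rewrite /u1 /u2; field.
have e2 : ml * u2 + kl = mi * u1 + ki by rewrite /u1 /u2; field.
have hu : u1 != u2.
  apply/eqP => e; apply: (hnc u1) => //; first by rewrite e1 e.
  by rewrite -e in e2.
have [LA [uA vA]] := hYi u1; have [LB [uB vB]] := hYj u1.
have [LC [uC vC]] := hYi u2; have [LD [uD vD]] := hYl u2.
exists [:: Yi u1; Yj u1; Yi u2; Yl u2]; split; last exact: mem4.
apply: cyc4.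
- by apply: (@neq_dot _ _ a2); rewrite vA vB e1; apply: lin_neq.
- by rewrite uA uB.
- by apply: (@neq_dot _ _ a1); rewrite uB uC.
- by rewrite vB vC.
- by apply: (@neq_dot _ _ a2); rewrite vC vD e2; apply: lin_neq; rewrite // eq_sym.
- by rewrite uC uD.
- by apply: (@neq_dot _ _ a1); rewrite uD uA eq_sym.
- by rewrite vD vA.
Qed.


Lemma nz_pair (R : realType) (m m' k k' a b : R) : a != 0 -> (m != m' \/ k != k') ->
  ((m - m') * a != 0) || ((m - m') * b + (k - k') != 0).
Proof.
move=> ha d; have [e|ne] := eqVneq m m'.
  have hk : k != k' by case: d => //; rewrite e eqxx.
  by rewrite e subrr !mul0r add0r subr_eq0 hk orbT.
by rewrite mulf_neq0 ?subr_eq0.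
Qed.

Lemma neq_of (R : realType) (x y e : R) : x - y = e -> e != 0 -> x != y.
Proof. by move=> <-; rewrite subr_eq0. Qed.

Lemma neq_of_sc (R : realType) (c x y e : R) : c * (x - y) = e -> e != 0 -> x != y.
Proof. by move=> <-; rewrite mulf_eq0 negb_or subr_eq0 => /andP[]. Qed.

Lemma cyc6G (R : realType) (n : nat) (a1 a2 : 'rV[R]_n) L
   m1 k1 (Y1 : R -> 'rV[R]_n) m2 k2 (Y2 : R -> 'rV[R]_n) m3 k3 (Y3 : R -> 'rV[R]_n) :
  (forall w, L (Y1 w) /\ dotv a1 (Y1 w) = w /\ dotv a2 (Y1 w) = m1 * w + k1) ->
  (forall w, L (Y2 w) /\ dotv a1 (Y2 w) = w /\ dotv a2 (Y2 w) = m2 * w + k2) ->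
  (forall w, L (Y3 w) /\ dotv a1 (Y3 w) = w /\ dotv a2 (Y3 w) = m3 * w + k3) ->
  m1 != 0 -> m2 != 0 -> m3 != 0 ->
  m1 != m2 \/ k1 != k2 -> m1 != m3 \/ k1 != k3 -> m2 != m3 \/ k2 != k3 ->
  m1 * (k2 - k3) + m2 * (k3 - k1) + m3 * (k1 - k2) = 0 ->
  goalP a1 a2 L.
Proof.
move=> hY1 hY2 hY3 h1 h2 h3 d12 d13 d23 hdel.
pose a' := m2 / m3; pose b' := (k2 - k3) / m3.
pose a'' := m1 / m3; pose b'' := (m1 * b' + k1 - k2) / m2.
have ha' : a' != 0 by rewrite /a' mulf_neq0 ?invr_eq0.
have ha'' : a'' != 0 by rewrite /a'' mulf_neq0 ?invr_eq0.
have hall : all (fun f => (f.1 != 0) || (f.2 != 0))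
   [:: (m1 - m2, k1 - k2); (m2 - m3, k2 - k3);
       ((m3 - m1) * a', (m3 - m1) * b' + (k3 - k1));
       ((m1 - m2) * a', (m1 - m2) * b' + (k1 - k2));
       ((m2 - m3) * a'', (m2 - m3) * b'' + (k2 - k3));
       (a'' - 1, b'')].
  have d31 : m3 != m1 \/ k3 != k1 by case: d13 => h; [left|right]; rewrite eq_sym.
  rewrite /= andbT; repeat (apply/andP; split).
  - by rewrite !subr_eq0; case: d12 => ->; rewrite ?orbT.
  - by rewrite !subr_eq0; case: d23 => ->; rewrite ?orbT.
  - exact: nz_pair.
  - exact: nz_pair.
  - exact: nz_pair.
  - have [e|ne] := eqVneq m1 m3.
      apply/orP; right.
      have -> : b'' = (k1 - k3) / m2 by rewrite /b'' /b' e; field; rewrite ?h2 ?h3.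
      rewrite mulf_neq0 ?invr_eq0 // subr_eq0.
      by case: d13 => //; rewrite e eqxx.
    apply/orP; left.
    have -> : a'' - 1 = (m1 - m3) / m3 by rewrite /a''; field; rewrite ?h3.
    by rewrite mulf_neq0 ?invr_eq0 // subr_eq0.
have [w hw] := avoid' hall.
move: hw; rewrite /= andbT => /andP[f1 /andP[f2 /andP[f3 /andP[f4 /andP[f5 f6]]]]].
pose w' := a' * w + b'; pose w'' := a'' * w + b''.
have E23 : m2 * w + k2 = m3 * w' + k3 by rewrite /w' /a' /b'; field; rewrite ?h3.
have E45 : m1 * w' + k1 = m2 * w'' + k2.
  by rewrite /w'' /w' /a'' /b'' /a' /b'; field; rewrite ?h2 ?h3.
have E61 : m3 * w'' + k3 = m1 * w + k1.
  apply/eqP; rewrite -subr_eq0.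
  have -> : m3 * w'' + k3 - (m1 * w + k1) =
     (m1 * (k2 - k3) + m2 * (k3 - k1) + m3 * (k1 - k2)) / m2.
    by rewrite /w'' /a'' /b'' /b'; field; rewrite ?h2 ?h3.
  by rewrite hdel mul0r.
have n12 : m1 * w + k1 != m2 * w + k2.
  by apply: (neq_of _ f1) => /=; ring.
have n23 : w != w'.
  by apply: (neq_of_sc (c := - m3) _ f2) => /=; rewrite /w' /a' /b'; field; rewrite ?h3.
have n34 : m3 * w' + k3 != m1 * w' + k1.
  by apply: (neq_of _ f3) => /=; rewrite /w'; ring.
have n45 : w' != w''.
  by apply: (neq_of_sc (c := - m2) _ f4) => /=; rewrite /w'' /w' /a'' /b'' /a' /b'; field; rewrite ?h2 ?h3.
have n56 : m2 * w'' + k2 != m3 * w'' + k3.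
  by apply: (neq_of _ f5) => /=; rewrite /w''; ring.
have n61 : w'' != w.
  by apply: (neq_of _ f6) => /=; rewrite /w''; ring.
have [L1 [u1 v1]] := hY1 w; have [L2 [u2 v2]] := hY2 w.
have [L3 [u3 v3]] := hY3 w'; have [L4 [u4 v4]] := hY1 w'.
have [L5 [u5 v5]] := hY2 w''; have [L6 [u6 v6]] := hY3 w''.
exists [:: Y1 w; Y2 w; Y3 w'; Y1 w'; Y2 w''; Y3 w'']; split; last exact: mem6.
apply: cyc6.
- by apply: (@neq_dot _ _ a2); rewrite v1 v2.
- by rewrite u1 u2.
- by apply: (@neq_dot _ _ a1); rewrite u2 u3.
- by rewrite v2 v3.
- by apply: (@neq_dot _ _ a2); rewrite v3 v4.
- by rewrite u3 u4.
- by apply: (@neq_dot _ _ a1); rewrite u4 u5.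
- by rewrite v4 v5.
- by apply: (@neq_dot _ _ a2); rewrite v5 v6.
- by rewrite u5 u6.
- by apply: (@neq_dot _ _ a1); rewrite u6 u1.
- by rewrite v6 v1.
Qed.


Lemma caseG (R : realType) (n : nat) (a1 a2 : 'rV[R]_n) L
   m1 k1 (Y1 : R -> 'rV[R]_n) m2 k2 (Y2 : R -> 'rV[R]_n) m3 k3 (Y3 : R -> 'rV[R]_n) :
  (forall w, L (Y1 w) /\ dotv a1 (Y1 w) = w /\ dotv a2 (Y1 w) = m1 * w + k1) ->
  (forall w, L (Y2 w) /\ dotv a1 (Y2 w) = w /\ dotv a2 (Y2 w) = m2 * w + k2) ->
  (forall w, L (Y3 w) /\ dotv a1 (Y3 w) = w /\ dotv a2 (Y3 w) = m3 * w + k3) ->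
  m1 != 0 -> m2 != 0 -> m3 != 0 ->
  m1 != m2 \/ k1 != k2 -> m1 != m3 \/ k1 != k3 -> m2 != m3 \/ k2 != k3 ->
  goalP a1 a2 L.
Proof.
move=> hY1 hY2 hY3 h1 h2 h3 d12 d13 d23.
have [hd|hd] := eqVneq (m1 * (k2 - k3) + m2 * (k3 - k1) + m3 * (k1 - k2)) 0.
  exact: (cyc6G hY1 hY2 hY3).
have [D1|D1] := eqVneq (m1 ^+ 2 - m2 * m3) 0; last first.
  apply: (cyc4G hY1 hY2 hY3 h1 D1) => w e1 e2; move/eqP: hd; apply.
  rewrite (_ : k2 = (m1 * w + k1) - m2 * w); last by rewrite -e1; ring.
  rewrite (_ : k3 = (m1 * w + k1) - m3 * w); last by rewrite -e2; ring.
  ring.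
have [D2|D2] := eqVneq (m2 ^+ 2 - m1 * m3) 0; last first.
  apply: (cyc4G hY2 hY1 hY3 h2 D2) => w e1 e2; move/eqP: hd; apply.
  rewrite (_ : k1 = (m2 * w + k2) - m1 * w); last by rewrite -e1; ring.
  rewrite (_ : k3 = (m2 * w + k2) - m3 * w); last by rewrite -e2; ring.
  ring.
have [D3|D3] := eqVneq (m3 ^+ 2 - m1 * m2) 0; last first.
  apply: (cyc4G hY3 hY1 hY2 h3 D3) => w e1 e2; move/eqP: hd; apply.
  rewrite (_ : k1 = (m3 * w + k3) - m1 * w); last by rewrite -e1; ring.
  rewrite (_ : k2 = (m3 * w + k3) - m2 * w); last by rewrite -e2; ring.
  ring.
move/eqP: D1; rewrite subr_eq0 => /eqP D1.
move/eqP: D2; rewrite subr_eq0 => /eqP D2.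
move/eqP: D3; rewrite subr_eq0 => /eqP D3.
have [e12 e13] := all_eq_slopes h1 D1 D2 D3.
move/eqP: hd; rewrite -e12 -e13 => hd; exfalso; apply: hd; ring.
Qed.

Unset Implicit Arguments.


Theorem theorem2p1 (R : realType) (n : nat) (hn : (2 <= n)%N)
    (a1 a2 : 'rV[R]_n) (hfree : free [:: a1; a2])
    (b1 b2 b3 c1 c2 c3 : 'rV[R]_n)
    (hb1 : b1 != 0) (hb2 : b2 != 0) (hb3 : b3 != 0)
    (h12 : ~ same_line b1 c1 b2 c2) (h13 : ~ same_line b1 c1 b3 c3)
    (h23 : ~ same_line b2 c2 b3 c3) :
  exists s : seq 'rV[R]_n,
    is_closed_path a1 a2 s /\
    (forall x, x \in s -> on_line b1 c1 x \/ on_line b2 c2 x \/ on_line b3 c3 x).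
Proof.
pose L x := on_line b1 c1 x \/ on_line b2 c2 x \/ on_line b3 c3 x.
suff : goalP a1 a2 L by [].
have hL1 : forall x, on_line b1 c1 x -> L x by move=> x h; left.
have hL2 : forall x, on_line b2 c2 x -> L x by move=> x h; right; left.
have hL3 : forall x, on_line b3 c3 x -> L x by move=> x h; right; right.
case: (classic (exists x y, L x /\ L y /\ dotv a1 x = dotv a1 y /\
                 dotv a2 x = dotv a2 y /\ x <> y)).
  move=> [x [y [Lx [Ly [e1 [e2 ne]]]]]]; exists [:: x; y]; split; first exact: cyc2.
  by move=> z; rewrite !inE => /orP[/eqP->|/eqP->].
move=> hn'.
have hinj : injP a1 a2 L.
  move=> x y Lx Ly e1 e2; apply: NNPP => ne; apply: hn'; exists x, y; tauto.
have s21 := same_line_sym h12; have s31 := same_line_sym h13.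
have s32 := same_line_sym h23.
have [p1|p1] := eqVneq (dotv a1 b1) 0.
  exact: (caseV hinj hL1 hL2 hL3 hb1 hb2 hb3 h12 h13 h23 p1).
have [p2|p2] := eqVneq (dotv a1 b2) 0.
  exact: (caseV hinj hL2 hL1 hL3 hb2 hb1 hb3 s21 h23 h13 p2).
have [p3|p3] := eqVneq (dotv a1 b3) 0.
  exact: (caseV hinj hL3 hL1 hL2 hb3 hb1 hb2 s31 s32 h12 p3).
have hinj' := injP_swap hinj.
have [r1|r1] := eqVneq (dotv a2 b1) 0.
  apply: goal_swap; exact: (caseV hinj' hL1 hL2 hL3 hb1 hb2 hb3 h12 h13 h23 r1).
have [r2|r2] := eqVneq (dotv a2 b2) 0.
  apply: goal_swap; exact: (caseV hinj' hL2 hL1 hL3 hb2 hb1 hb3 s21 h23 h13 r2).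
have [r3|r3] := eqVneq (dotv a2 b3) 0.
  apply: goal_swap; exact: (caseV hinj' hL3 hL1 hL2 hb3 hb1 hb2 s31 s32 h12 r3).
have [m1 [k1 [Y1 [hY1 [hy1 hm1]]]]] := graph_struct a2 c1 p1.
have [m2 [k2 [Y2 [hY2 [hy2 hm2]]]]] := graph_struct a2 c2 p2.
have [m3 [k3 [Y3 [hY3 [hy3 hm3]]]]] := graph_struct a2 c3 p3.
have d12 := graph_distinct hinj hL1 hL2 hY1 hy1 hY2 hy2 h12.
have d13 := graph_distinct hinj hL1 hL3 hY1 hy1 hY3 hy3 h13.
have d23 := graph_distinct hinj hL2 hL3 hY2 hy2 hY3 hy3 h23.
have hm1' : m1 != 0 by apply/eqP => /hm1 /eqP; rewrite (negbTE r1).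
have hm2' : m2 != 0 by apply/eqP => /hm2 /eqP; rewrite (negbTE r2).
have hm3' : m3 != 0 by apply/eqP => /hm3 /eqP; rewrite (negbTE r3).
have hY1' : forall w, L (Y1 w) /\ dotv a1 (Y1 w) = w /\ dotv a2 (Y1 w) = m1 * w + k1.
  by move=> w; have [h h'] := hY1 w; split=> //; apply: hL1.
have hY2' : forall w, L (Y2 w) /\ dotv a1 (Y2 w) = w /\ dotv a2 (Y2 w) = m2 * w + k2.
  by move=> w; have [h h'] := hY2 w; split=> //; apply: hL2.
have hY3' : forall w, L (Y3 w) /\ dotv a1 (Y3 w) = w /\ dotv a2 (Y3 w) = m3 * w + k3.
  by move=> w; have [h h'] := hY3 w; split=> //; apply: hL3.
exact: (caseG hY1' hY2' hY3' hm1' hm2' hm3' d12 d13 d23).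
Qed.
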